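(* Let $a\geq 3$ and $m\geq 1$ be integers. There is a bijective correspondence between right $0$-pyramids of pieces of length $a$ and of size $m$, and $a$-ary trees with $m$ nodes.
   Context: For a positive integer $n$, an $n$-ary tree is a planar rooted tree all of whose vertices have order (degree) $1$ or $n+1$ and whose root has order $1$; the vertices of order $n+1$ are called nodes. A piece is an open interval $]s,s+a[$ with $s\in\mathbb Z$; two pieces are concurrent iff their intervals intersect. A heap is a finite configuration obtained by successively dropping pieces vertically towards the horizontal axis, each coming to rest on the axis or on top of the highest previously placed piece whose interval meets its own; configurations (not dropping orders) are counted. A pyramid is a heap with a unique bottom piece (exactly one piece on the axis); its size is its number of pieces. A right $0$-pyramid is a pyramid whose bottom piece covers $]0,a[$ and is a leftmost piece (no piece covers $]t,t+a[$ with $t<0$). *)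

(* Defs.v *)
From HB Require Import structures.
From mathcomp Require Import all_boot all_order all_algebra.
From mathcomp Require Import finmap.
Set Implicit Arguments. Unset Strict Implicit. Unset Printing Implicit Defensive.
Import Order.TTheory GRing.Theory Num.Theory.
Local Open Scope fset_scope.

(* A planar rooted tree: the (planted) root of order 1 is attached to the
   subtree below it; a subtree is a leaf or a node with an ordered list of
   children.  A node has order n+1 (its parent + n children). *)
Inductive ptree : Type := Leaf | Node of seq ptree.

Fixpoint is_nary (n : nat) (t : ptree) : bool :=
  match t with
  | Leaf => true
  | Node ts => (size ts == n) && all (is_nary n) ts
  end.

Fixpoint nb_nodes (t : ptree) : nat :=
  match t with
  | Leaf => 0
  | Node ts => (sumn (map nb_nodes ts)).+1
  end.

Definition nary_tree (n m : nat) : Type :=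
  {t : ptree | is_nary n t && (nb_nodes t == m)}.

(* A placed piece is (s, h): interval ]s, s+a[ resting at level h
   (h = 0 means on the horizontal axis). *)
Definition placed := (int * nat)%type.

Definition concurrent (a : nat) (s t : int) : bool :=
  ((s < t + a%:Z) && (t < s + a%:Z))%R.

Definition drop_level (a : nat) (C : {fset placed}) (s : int) : nat :=
  \max_(p <- enum_fset C | concurrent a p.1 s) p.2.+1.

Definition drop_piece (a : nat) (C : {fset placed}) (s : int) : {fset placed} :=
  (s, drop_level a C s) |` C.

Inductive is_heap (a : nat) : {fset placed} -> Prop :=
  | heap_empty : is_heap a fset0
  | heap_drop C s : is_heap a C -> is_heap a (drop_piece a C s).

Definition is_pyramid (a : nat) (C : {fset placed}) : Prop :=
  is_heap a C /\ #|` [fset p in C | p.2 == 0%N]| = 1%N.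

Definition is_right0_pyramid (a : nat) (C : {fset placed}) : Prop :=
  is_pyramid a C /\ ((0%R, 0%N) \in C) /\ (forall p, p \in C -> (0 <= p.1)%R).

Definition right0_pyramid (a m : nat) : Type :=
  {C : {fset placed} | is_right0_pyramid a C /\ #|` C| = m}.

(* Main.v *)
Require Import Defs.
From HB Require Import structures.
From mathcomp Require Import all_boot all_order all_algebra finmap zify.
From Stdlib Require Import ClassicalEpsilon ProofIrrelevance.
Import Order.TTheory GRing.Theory Num.Theory.
Set Implicit Arguments. Unset Strict Implicit. Unset Printing Implicit Defensive.
Local Open Scope fset_scope.

Fixpoint heapr (a : nat) (r : seq int) : {fset placed} :=
  match r with
  | [::] => fset0
  | x :: r' => drop_piece a (heapr a r') x
  end.

Lemma concurrentC a x y : concurrent a x y = concurrent a y x.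
Proof. by rewrite /concurrent andbC. Qed.

Lemma concurrent_refl a x : 0 < a -> concurrent a x x.
Proof.
move=> a0; rewrite /concurrent; have h : ((x < x + a%:Z)%R).
  by rewrite ltrDl ltz_nat.
by rewrite h.
Qed.

Lemma drop_level_ge a H x p : p \in H -> concurrent a p.1 x -> p.2 < drop_level a H x.
Proof.
move=> pH c; rewrite /drop_level.
exact: (@leq_bigmax_seq _ (enum_fset H) (fun q : placed => concurrent a q.1 x) (fun q => q.2.+1) p).
Qed.

Lemma drop_new a H x : 0 < a -> (x, drop_level a H x) \notin H.
Proof.
move=> a0; apply/negP => pH.
have := drop_level_ge pH (concurrent_refl x a0).
by rewrite ltnn.
Qed.

Lemma drop_level0 a x : drop_level a fset0 x = 0.
Proof. rewrite /drop_level; have -> : enum_fset (fset0 : {fset placed}) = [::] by [].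
by rewrite big_nil. Qed.

Lemma drop_level_U1 a H p y : p \notin H ->
  drop_level a (p |` H) y =
  if concurrent a p.1 y then maxn p.2.+1 (drop_level a H y) else drop_level a H y.
Proof.
move=> pH; rewrite /drop_level big_mkcond /= big_fsetU1 //= -big_mkcond /=.
by case: ifP => _ //; rewrite max0n.
Qed.

Lemma drop_comm a H x y : 0 < a -> ~~ concurrent a x y ->
  drop_piece a (drop_piece a H x) y = drop_piece a (drop_piece a H y) x.
Proof.
move=> a0 nc; rewrite /drop_piece.
rewrite !drop_level_U1 ?drop_new //= (negbTE nc) concurrentC (negbTE nc).
by rewrite fsetUCA.
Qed.

Lemma card_heapr a r : 0 < a -> #|` heapr a r| = size r.
Proof.
move=> a0; elim: r => [|x r IH] /=; first by [].  
by rewrite /drop_piece cardfsU1 drop_new // IH.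
Qed.

Lemma heapr_is_heap a r : is_heap a (heapr a r).
Proof. elim: r => [|x r IH] /=; [exact: heap_empty | exact: heap_drop]. Qed.

Lemma is_heap_heapr a C : is_heap a C -> exists r, C = heapr a r.
Proof.
elim => [|C' s _ [r ->]]; first by exists [::].
by exists (s :: r).
Qed.

Lemma mem_heapr a r p : p \in heapr a r -> p.1 \in r.
Proof.
elim: r => [|x r IH] /=; first by rewrite inE.
rewrite /drop_piece !inE => /orP [/eqP -> //=|/IH ->]; first by rewrite eqxx.
by rewrite orbT.
Qed.

Lemma heapr_mem a r x : x \in r -> exists h, (x, h) \in heapr a r.
Proof.
elim: r => [|y r IH] //=; rewrite inE => /orP [/eqP ->|/IH [h xh]].
  by exists (drop_level a (heapr a r) y); rewrite /drop_piece !inE eqxx.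
by exists h; rewrite /drop_piece !inE xh orbT.
Qed.

Lemma heapr_cat a u w : heapr a w `<=` heapr a (u ++ w).
Proof.
elim: u => [|x u IH] //=.
by apply: fsubset_trans IH _; rewrite /drop_piece fsubsetU1.
Qed.

Definition Rl (a : nat) : rel int := fun x y => (x < y + a%:Z)%R.

Fixpoint ins (a : nat) (y : int) (r : seq int) : seq int :=
  match r with
  | [::] => [:: y]
  | x :: r' => if (y < x + a%:Z)%R then y :: x :: r' else x :: ins a y r'
  end.

Definition norm (a : nat) (r : seq int) : seq int := foldr (ins a) [::] r.

Lemma heapr_ins a y r : 0 < a -> heapr a (ins a y r) = heapr a (y :: r).
Proof.
move=> a0; elim: r => [|x r IH] //=.
case: ifP => // h /=; rewrite IH /= drop_comm //.
by rewrite /concurrent h.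
Qed.

Lemma ins_path a y r x : 0 < a -> Rl a x y -> path (Rl a) x r -> path (Rl a) x (ins a y r).
Proof.
move=> a0; elim: r x => [|z r IH] x /=; first by move=> -> .
move=> xy /andP [xz pz]; case: ifP => h /=.
  by rewrite /= xy pz andbT; exact: h.
rewrite xz IH //; move/negbT: h; rewrite /Rl -leNgt; move: a0; lia.
Qed.

Lemma ins_sorted a y r : 0 < a -> sorted (Rl a) r -> sorted (Rl a) (ins a y r).
Proof.
move=> a0; case: r => [|z r] //= pz; case: ifP => h /=.
  by rewrite pz andbT; exact: h.
by apply: ins_path => //; move/negbT: h; rewrite /Rl -leNgt; move: a0; lia.
Qed.

Lemma heapr_norm a r : 0 < a -> heapr a (norm a r) = heapr a r.
Proof. by move=> a0; elim: r => [|y r IH] //=; rewrite heapr_ins //= IH. Qed.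

Lemma norm_sorted a r : 0 < a -> sorted (Rl a) (norm a r).
Proof. by move=> a0; elim: r => [|y r IH] //=; apply: ins_sorted. Qed.

Lemma mem_split (T : eqType) (z : T) s : z \in s -> exists u1 u2, s = u1 ++ z :: u2.
Proof. by case/splitPr => u1 u2; exists u1, u2. Qed.

Lemma split_mem a r p : p \in heapr a r ->
  exists u y v, r = u ++ y :: v /\ p = (y, drop_level a (heapr a v) y).
Proof.
elim: r => [|x r IH] /=; first by rewrite inE.
rewrite /drop_piece !inE => /orP [/eqP ->|/IH [u [y [v [-> ->]]]]].
  by exists [::], x, r.
by exists (x :: u), y, v.
Qed.

Lemma cross a (y : int) u : forall x, path (Rl a) x (rcons u y) ->
  all (fun z => ~~ concurrent a z y) (x :: u) -> (x + a%:Z <= y)%R.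
Proof.
elim: u => [|z u IH] x /=.
  rewrite andbT /Rl /concurrent => h1; rewrite andbT; move: h1; lia.
move=> /andP [xz pz] /andP [nx /andP [nz na]].
have := IH z pz; rewrite /= nz na => /(_ isT).
move: xz nx; rewrite /Rl /concurrent; lia.
Qed.

Definition maxl a (C : {fset placed}) (q : placed) :=
  forall p, p \in C -> concurrent a q.1 p.1 -> p.2 <= q.2.

Lemma new_max a r x : 0 < a ->
  maxl a (heapr a (x :: r)) (x, drop_level a (heapr a r) x).
Proof.
move=> a0 p /=; rewrite /drop_piece !inE => /orP [/eqP -> //|ph] c.
by apply: ltnW; apply: drop_level_ge => //; rewrite concurrentC.
Qed.

Lemma top_min a x r q : 0 < a -> sorted (Rl a) (x :: r) -> q \in heapr a (x :: r) ->
  maxl a (heapr a (x :: r)) q ->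
  q = (x, drop_level a (heapr a r) x) \/ (x + a%:Z <= q.1)%R.
Proof.
move=> a0 srt; rewrite /= /drop_piece !inE => /orP [/eqP -> _|qr mq]; first by left.
right; have [u [y [v [er eq]]]] := split_mem qr.
rewrite eq /=; apply: (@cross a y u x).
  move: srt; rewrite /= er cat_path /= -cats1 cat_path /=.
  by case/andP=> -> /andP [-> _].
apply/allP => z zin; apply/negP => czy.
have [u1 [u2 e]] := mem_split zin.
have E : x :: r = u1 ++ z :: (u2 ++ y :: v) by rewrite er -cat_cons e -catA.
set pz := (z, drop_level a (heapr a (u2 ++ y :: v)) z).
have pzin : pz \in heapr a (x :: r).
  rewrite E; apply: (fsubsetP (heapr_cat _ _ _)); rewrite /= /drop_piece !inE eqxx //.
have qin : q \in heapr a (u2 ++ y :: v).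
  apply: (fsubsetP (heapr_cat _ _ _)); rewrite /= /drop_piece !inE eq eqxx //.
have h1 : q.2 < pz.2 by rewrite /pz /=; apply: drop_level_ge qin _; rewrite eq /= concurrentC.
have h2 := mq pz pzin; rewrite eq /= concurrentC czy in h2.
move: h1 (h2 isT); rewrite eq /=; lia.
Qed.

Lemma heapr_inj a r1 r2 : 0 < a -> sorted (Rl a) r1 -> sorted (Rl a) r2 ->
  heapr a r1 = heapr a r2 -> r1 = r2.
Proof.
move=> a0; elim: r1 r2 => [|x1 r1 IH] [|x2 r2] //.
- by move=> _ _ /(congr1 (fun C => #|` C|)); rewrite !card_heapr.
- by move=> _ _ /(congr1 (fun C => #|` C|)); rewrite !card_heapr.
move=> s1 s2 E.
set p1 := (x1, drop_level a (heapr a r1) x1).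
set p2 := (x2, drop_level a (heapr a r2) x2).
have m1 := @new_max a r1 x1 a0; have m2 := @new_max a r2 x2 a0.
have i1 : p1 \in heapr a (x1 :: r1) by rewrite /= /drop_piece !inE eqxx.
have i2 : p2 \in heapr a (x2 :: r2) by rewrite /= /drop_piece !inE eqxx.
have ep : p1 = p2.
  have i1' : p1 \in heapr a (x2 :: r2) by rewrite -E.
  have m1' : maxl a (heapr a (x2 :: r2)) p1 by rewrite -E.
  have i2' : p2 \in heapr a (x1 :: r1) by rewrite E.
  have m2' : maxl a (heapr a (x1 :: r1)) p2 by rewrite E.
  have [->//|h1] := top_min a0 s2 i1' m1'.
  have [->//|h2] := top_min a0 s1 i2' m2'.
  move: h1 h2 => /=; lia.
have ex : x1 = x2 by move: ep => [].
have er : heapr a r1 = heapr a r2.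
  have := congr1 (fun C => C `\ p1) E; rewrite /= /drop_piece -/p1 fsetU1K ?drop_new //.
  by rewrite ep -/p2 fsetU1K ?drop_new.
by rewrite ex (IH r2 (path_sorted s1) (path_sorted s2) er).
Qed.

Lemma cross2 a (x : int) l : forall y, path (Rl a) y l -> (x + a%:Z <= y)%R ->
  all (fun z => ~~ concurrent a x z) l -> (x + a%:Z <= last y l)%R.
Proof.
elim: l => [|z l IH] y //= /andP [yz pl] xy /andP [nz na].
apply: IH => //; move: yz nz; rewrite /Rl /concurrent; move: xy; lia.
Qed.

Lemma new_level a x r : 0 < a -> sorted (Rl a) (x :: r) -> all (fun z => 0 <= z)%R (x :: r) ->
  r != [::] -> last 1%R r = 0%R -> 0 < drop_level a (heapr a r) x.
Proof.
move=> a0 srt pos rn lr.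
have [y yr cy] : exists2 y, y \in r & concurrent a x y.
  apply/hasP; apply/negPn/negP => nh.
  case: r srt pos rn lr nh => [|y l] //= /andP [xy pl] /andP [x0 /andP [y0 _]] _ lr.
  rewrite negb_or => /andP [nxy /hasPn nl].
  have h1 : (x + a%:Z <= y)%R by move: xy nxy; rewrite /Rl /concurrent; lia.
  have := cross2 pl h1; rewrite lr.
  have -> : all (fun z => ~~ concurrent a x z) l by apply/allP => z /nl.
  by move=> /(_ isT); move: x0 a0; lia.
have [h yh] := heapr_mem a yr.
have := @drop_level_ge a (heapr a r) x (y, h) yh; rewrite /= concurrentC cy.
by move=> /(_ isT); lia.
Qed.

Lemma level0 a r : 0 < a -> sorted (Rl a) r -> all (fun z => 0 <= z)%R r ->
  last 1%R r = 0%R -> forall p, p \in heapr a r -> p.2 = 0 -> p = (0%R, 0).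
Proof.
move=> a0; elim: r => [|x r IH] //=.
move=> srt /andP [x0 pos] lr p.
case: (altP (r =P [::])) => [rn|rn].
  move: lr; rewrite rn /= => -> ; rewrite /drop_piece drop_level0 !inE => /orP [/eqP -> //|].
  by [].
have lr' : last 1%R r = 0%R by case: r rn lr {srt pos IH}.
rewrite /drop_piece !inE => /orP [/eqP -> /= h|pr].
  by have := new_level a0 srt (_ : all _ (x :: r)) rn lr'; rewrite /= x0 pos h => /(_ isT).
exact: IH (path_sorted srt) pos lr' p pr.
Qed.

Lemma mem00 a r : last 1%R r = 0%R -> (0%R, 0) \in heapr a r.
Proof.
case/lastP: r => [|u z] /=; first by move/eqP; rewrite oner_eq0.
rewrite last_rcons => ->; rewrite -cats1.
apply: (fsubsetP (heapr_cat _ _ _)); by rewrite /= /drop_piece drop_level0 !inE.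
Qed.

Lemma word_pyr a r : 0 < a -> sorted (Rl a) r -> all (fun z => 0 <= z)%R r ->
  last 1%R r = 0%R -> is_right0_pyramid a (heapr a r) /\ #|` heapr a r| = size r.
Proof.
move=> a0 srt pos lr; split; last exact: card_heapr.
split; [split|split].
- exact: heapr_is_heap.
- apply/eqP/cardfs1P; exists (0%R, 0); apply/fsetP => p; rewrite !inE.
  apply/andP/eqP => [[pin /eqP p0]|->]; first exact: level0 pin p0.
  by rewrite mem00.
- exact: mem00.
- by move=> p /(mem_heapr) pin; move/allP: pos; apply.
Qed.

Local Close Scope fset_scope.

Fixpoint valid (a n : nat) (s : seq nat) : bool :=
  match s with [::] => true | j :: r => (j < n) && valid a (j + a) r end.

Fixpoint psi (a n : nat) (s : seq nat) : seq ptree :=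
  match s with
  | [::] => nseq n Leaf
  | j :: r => let fs := psi a (j + a) r in
      take j fs ++ Node (drop j fs) :: nseq (n - j.+1) Leaf
  end.

Lemma size_psi a n s : valid a n s -> size (psi a n s) = n.
Proof.
elim: s n => [|j r IH] n /=; first by rewrite size_nseq.
case/andP => jn v; rewrite size_cat /= size_nseq size_take IH //.
have -> : j < j + a = (0 < a) by lia.
case: (ltnP 0 a) => h /=; lia.
Qed.

Lemma all_psi a n s : valid a n s -> all (is_nary a) (psi a n s).
Proof.
elim: s n => [|j r IH] n /=; first by rewrite all_nseq orbT.
case/andP => jn v; have := IH _ v; rewrite -{1}(cat_take_drop j (psi a (j + a) r)).
rewrite !all_cat /= => /andP [-> ->] /=.
rewrite size_drop size_psi // addKn eqxx /=.
by rewrite all_nseq orbT.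
Qed.

Lemma sumn_nseq_leaf k : sumn (map nb_nodes (nseq k Leaf)) = 0.
Proof. by elim: k. Qed.

Lemma nodes_psi a n s : valid a n s -> sumn (map nb_nodes (psi a n s)) = size s.
Proof.
elim: s n => [|j r IH] n /=; first by rewrite sumn_nseq_leaf.
case/andP => jn v; rewrite map_cat sumn_cat /= sumn_nseq_leaf addn0.
have := IH _ v; rewrite -{1}(cat_take_drop j (psi a (j + a) r)) map_cat sumn_cat.
lia.
Qed.

Definition isLeaf (t : ptree) := if t is Leaf then true else false.

Lemma find_last a n j r : valid a n (j :: r) ->
  find (fun t => ~~ isLeaf t) (rev (psi a n (j :: r))) = n - j.+1.
Proof.
rewrite /= => /andP [jn v]; rewrite rev_cat rev_cons rev_nseq -cats1 find_cat.
rewrite has_cat has_nseq /= orbT find_cat has_nseq /= size_nseq andbF addn0.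
by []. Qed.

Lemma psi_nil_all a n s : valid a n s -> s != [::] -> ~~ all isLeaf (psi a n s).
Proof.
case: s => [|j r] //= /andP [jn v] _.
by rewrite all_cat /= andbF.
Qed.

Lemma psi_inj a n s1 s2 : valid a n s1 -> valid a n s2 -> psi a n s1 = psi a n s2 -> s1 = s2.
Proof.
elim: s1 n s2 => [|j1 r1 IH] n [|j2 r2] //.
- move=> _ v2 E; have := psi_nil_all v2 isT; rewrite -E /= all_nseq.
  by case: n {E v2}.
- move=> v1 _ E; have := psi_nil_all v1 isT; rewrite E /= all_nseq.
  by case: n {E v1}.
move=> v1 v2 E.
have ej : j1 = j2.
  have := find_last v1; rewrite E find_last //.
  by move: v1 v2 => /= /andP [h1 _] /andP [h2 _]; lia.
subst j2; move: v1 v2 => /= /andP [jn v1] /andP [_ v2].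
have sz1 := size_psi v1; have sz2 := size_psi v2.
have st : forall fs : seq ptree, size fs = j1 + a -> size (take j1 fs) = j1.
  by move=> fs h; rewrite size_take h; case: ltnP => //; lia.
have e1 := take_size_cat (Node (drop j1 (psi a (j1 + a) r1)) :: nseq (n - j1.+1) Leaf) (st _ sz1).
have e2 := take_size_cat (Node (drop j1 (psi a (j1 + a) r2)) :: nseq (n - j1.+1) Leaf) (st _ sz2).
have d1 := drop_size_cat (Node (drop j1 (psi a (j1 + a) r1)) :: nseq (n - j1.+1) Leaf) (st _ sz1).
have d2 := drop_size_cat (Node (drop j1 (psi a (j1 + a) r2)) :: nseq (n - j1.+1) Leaf) (st _ sz2).
move: E => /= E.
have Et : take j1 (psi a (j1 + a) r1) = take j1 (psi a (j1 + a) r2) by rewrite -e1 -e2 E.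
have Ed : drop j1 (psi a (j1 + a) r1) = drop j1 (psi a (j1 + a) r2).
  by have := congr1 (drop j1) E; rewrite d1 d2 => -[].
have Ef : psi a (j1 + a) r1 = psi a (j1 + a) r2.
  by rewrite -(cat_take_drop j1 (psi a (j1 + a) r1)) Et Ed cat_take_drop.
by rewrite (IH _ _ v1 v2 Ef).
Qed.

Lemma decomp (ts : seq ptree) : ~~ all isLeaf ts ->
  exists A us k, ts = A ++ Node us :: nseq k Leaf.
Proof.
elim/last_ind: ts => [|ts t IH] //; rewrite -cats1 all_cat /= andbT.
case: t => [|us] /=.
  rewrite andbT => /IH [A [us [k ->]]]; exists A, us, k.+1.
  by rewrite -catA /= -[Leaf :: nil]/(nseq 1 Leaf) -nseqD addn1.
by move=> _; exists ts, us, 0.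
Qed.

Lemma leaves_nseq (ts : seq ptree) : all isLeaf ts -> ts = nseq (size ts) Leaf.
Proof. by elim: ts => [|[|us] ts IH] //= /IH {1}->. Qed.

Lemma sumn0_leaves (ts : seq ptree) : sumn (map nb_nodes ts) = 0 -> all isLeaf ts.
Proof. by elim: ts => [|[|us] ts IH] //= /IH. Qed.

Lemma psi_surj a N : forall ts, sumn (map nb_nodes ts) = N -> all (is_nary a) ts ->
  exists s, [/\ valid a (size ts) s, psi a (size ts) s = ts & size s = N].
Proof.
elim: N => [|N IH] ts.
  by move=> /sumn0_leaves/leaves_nseq E _; exists [::]; split => //; rewrite -E.
move=> sn na.
have nl : ~~ all isLeaf ts.
  by apply/negP => /leaves_nseq E; move: sn; rewrite E sumn_nseq_leaf.
have [A [us [k E]]] := decomp nl; subst ts.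
move: sn na; rewrite map_cat sumn_cat /= sumn_nseq_leaf all_cat /= all_nseq orbT andbT.
move=> sn /andP [nA /andP [/eqP sus nus]].
have [s [v ps ss]] : exists s, [/\ valid a (size (A ++ us)) s, psi a (size (A ++ us)) s = A ++ us & size s = N].
  apply: IH; last by rewrite all_cat nA nus.
  by rewrite map_cat sumn_cat; lia.
exists (size A :: s); split => /=.
- rewrite size_cat /=; apply/andP; split; first lia.
  by move: v; rewrite size_cat sus.
  move: ps; rewrite size_cat sus => ->.
  rewrite take_size_cat // drop_size_cat //; congr (_ ++ Node _ :: nseq _ _).
  rewrite size_cat /=; rewrite size_nseq; lia.
- by rewrite ss.
Qed.

Local Open Scope fset_scope.

Definition Rn (a : nat) : rel nat := fun x y => y < x + a.

Lemma sorted_conv a s : sorted (Rl a) (rev (map Posz s)) = sorted (Rn a) s.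
Proof.
rewrite rev_sorted sorted_map; apply: eq_sorted => x y.
by rewrite /relpre /Rl /Rn /=; lia.
Qed.

Lemma valid_iff a n s : valid a n s = (if s is j :: _ then j < n else true) && sorted (Rn a) s.
Proof.
elim: s n => [|j r IH] n //=; rewrite IH; case: r {IH} => [|k r] //=.
Qed.

Lemma last_revP (s : seq nat) : last 1%R (rev (map Posz s)) = head 1%R (map Posz s).
Proof. by case: s => [|j r] //=; rewrite rev_cons last_rcons. Qed.

Lemma word_ok a m s : 0 < a -> 1 <= m -> valid a 1 s && (size s == m) ->
  is_right0_pyramid a (heapr a (rev (map Posz s))) /\ #|` heapr a (rev (map Posz s))| = m.
Proof.
move=> a0 m1 /andP [v /eqP sm].
have := @word_pyr a (rev (map Posz s)) a0.
rewrite size_rev size_map sm sorted_conv; move: v; rewrite valid_iff.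
case: s sm => [|j r] /=; first by move=> E; rewrite -E in m1.
move=> _ /andP [j0 srt]; rewrite srt => /(_ isT); apply.
  by rewrite all_rev /= all_map; apply/allP => x.
by rewrite rev_cons last_rcons; move: j0 {srt}; case: j.
Qed.

Lemma pyr_word a m C : 0 < a -> 1 <= m -> is_right0_pyramid a C -> #|` C| = m ->
  exists s, valid a 1 s && (size s == m) /\ heapr a (rev (map Posz s)) = C.
Proof.
move=> a0 m1 [[hp c1] [c00 pos]] cm.
have [r Er] := is_heap_heapr hp.
set r0 := norm a r.
have E0 : heapr a r0 = C by rewrite heapr_norm.
have pos0 : all (fun z => 0 <= z)%R r0.
  apply/allP => x xr; have [h xh] := heapr_mem a xr; rewrite E0 in xh.
  exact: (pos _ xh).
have sz : size r0 = m by rewrite -(@card_heapr a) // E0.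
have Ms : map Posz (map absz (rev r0)) = rev r0.
  rewrite -map_comp; apply: map_id_in => x; rewrite mem_rev => xr.
  by rewrite /= gez0_abs //; move/allP: pos0; apply.
exists (map absz (rev r0)); split; last by rewrite Ms revK.
rewrite size_map size_rev sz eqxx andbT valid_iff -sorted_conv Ms revK norm_sorted // andbT.
case/lastP: r0 pos0 E0 sz Ms => [|u z] pos0 E0 sz Ms.
  by move: cm m1; rewrite -E0 => <-.
rewrite rev_rcons /=.
have z0 : (z, 0) \in C.
  rewrite -E0 -cats1; apply: (fsubsetP (heapr_cat _ _ _)).
  by rewrite /= /drop_piece drop_level0 !inE eqxx.
move/eqP: c1 => /cardfs1P [p0 Ep].
have h1 : (z, 0) \in [fset p in C | p.2 == 0] by rewrite !inE z0.
have h2 : (0%R, 0) \in [fset p in C | p.2 == 0] by rewrite !inE c00.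
rewrite Ep !inE in h1 h2.
by move: h1 h2 => /eqP <- /eqP [<-].
Qed.

Lemma sig_eq (T : Type) (P : T -> Prop) (x y : sig P) : proj1_sig x = proj1_sig y -> x = y.
Proof.
case: x y => [x px] [y py] /= exy; subst y; congr exist; exact: proof_irrelevance.
Qed.

Lemma tree_of_word a m s : valid a 1 s && (size s == m) ->
  is_nary a (head Leaf (psi a 1 s)) && (nb_nodes (head Leaf (psi a 1 s)) == m).
Proof.
case/andP=> v /eqP sm.
have sz := size_psi v; have al := all_psi v; have nd := nodes_psi v.
case: (psi a 1 s) sz al nd => [|t [|]] //= _; rewrite andbT => ->.
by rewrite addn0 => ->; rewrite sm eqxx.
Qed.

Lemma psi_single a s : valid a 1 s -> psi a 1 s = [:: head Leaf (psi a 1 s)].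
Proof. by move=> v; have := size_psi v; case: (psi a 1 s) => [|t [|]]. Qed.

Theorem proposition2 (a m : nat) :
  3 <= a -> 1 <= m ->
  exists f : right0_pyramid a m -> nary_tree a m, bijective f.
Proof.
move=> a3 m1; have a0 : 0 < a by lia.
pose W := {s : seq nat | valid a 1 s && (size s == m)}.
pose g (w : W) : right0_pyramid a m :=
  exist _ (heapr a (rev (map Posz (proj1_sig w)))) (word_ok a0 m1 (proj2_sig w)).
pose tr (w : W) : nary_tree a m :=
  exist _ (head Leaf (psi a 1 (proj1_sig w))) (tree_of_word (proj2_sig w)).
have g_inj : forall w1 w2, g w1 = g w2 -> w1 = w2.
  move=> [s1 p1] [s2 p2] /(congr1 (@proj1_sig _ _)) /= E; apply: sig_eq => /=.
  move: p1 p2 => /andP [v1 _] /andP [v2 _].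
  have := heapr_inj a0 _ _ E; rewrite !sorted_conv.
  move: v1 v2; rewrite !valid_iff => /andP [_ ->] /andP [_ ->] /(_ isT isT).
  by move/(can_inj revK)/(inj_map (can_inj absz_nat)).
have g_surj : forall C, exists w, g w = C.
  move=> [C [pC cC]]; have [s [ps E]] := pyr_word a0 m1 pC cC.
  by exists (exist _ s ps); apply: sig_eq.
have tr_inj : forall w1 w2, tr w1 = tr w2 -> w1 = w2.
  move=> [s1 p1] [s2 p2] /(congr1 (@proj1_sig _ _)) /= E; apply: sig_eq => /=.
  move: p1 p2 => /andP [v1 _] /andP [v2 _].
  by apply: (psi_inj v1 v2); rewrite (psi_single v1) (psi_single v2) E.
have tr_surj : forall t, exists w, tr w = t.
  move=> [t pt]; have /andP [nt /eqP mt] := pt.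
  have [s [v ps ss]] : exists s, [/\ valid a (size [:: t]) s, psi a (size [:: t]) s = [:: t] & size s = m].
    by apply: psi_surj; rewrite /= ?addn0 ?nt.
  have pw : valid a 1 s && (size s == m) by rewrite v ss eqxx.
  by exists (exist _ s pw); apply: sig_eq => /=; rewrite ps.
pose ginv C := proj1_sig (constructive_indefinite_description _ (g_surj C)).
pose tinv t := proj1_sig (constructive_indefinite_description _ (tr_surj t)).
have ginvK : forall C, g (ginv C) = C.
  by move=> C; rewrite /ginv; case: constructive_indefinite_description.
have tinvK : forall t, tr (tinv t) = t.
  by move=> t; rewrite /tinv; case: constructive_indefinite_description.
exists (fun C => tr (ginv C)); exists (fun t => g (tinv t)).
- move=> C; have -> : tinv (tr (ginv C)) = ginv C by apply: tr_inj; rewrite tinvK.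
  exact: ginvK.
- move=> t; have -> : ginv (g (tinv t)) = tinv t by apply: g_inj; rewrite ginvK.
  exact: tinvK.
Qed.
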